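(* Let $(f_n)$ be a sequence of finitary Boolean functions. The following are equivalent: (1) there exists a sequence of integers $r_n\to\infty$ such that for every integer sequence $(m_n)$ with $m_n\ge r_n$ for all $n$, the sequence $(B_{m_n}f_n)_n$ is noise sensitive; (2) $(f_n)$ is noise sensitive.
   Context: Let $\Omega=\{-1,1\}$ and $\Omega^\infty=\{-1,1\}^{\mathbb N}$ with the uniform product probability measure; $\omega$ denotes a uniformly random element. A Boolean function is a measurable map $f:\Omega^\infty\to\Omega$. A set $W\subseteq\mathbb N$ is a witness set for $f$ at $\omega$ if there is an event $A$ with $\mathbb P(A)=1$ such that for all $\tilde\omega\in A$: if $\tilde\omega_i=\omega_i$ for all $i\in W$ then $f(\tilde\omega)=f(\omega)$. $f$ is finitary if almost surely a finite witness set exists; then $W(f)(\omega)$ denotes the least finite witness set in the order: smaller maximum first, then smaller cardinality, then lexicographic. $B_mf=\mathbf 1_{\{W(f)\subseteq[m]\}}f-\mathbf 1_{\{W(f)\not\subseteq[m]\}}$. For $\epsilon\in[0,1]$, $\omega^\epsilon$ is obtained from $\omega$ by, independently for each coordinate, with probability $\epsilon$ replacing $\omega_i$ by a fresh uniform bit. A sequence $(g_n)$ of Boolean functions is noise sensitive if for every $\epsilon\in(0,1]$, $\mathbb E[g_n(\omega)g_n(\omega^\epsilon)]-\mathbb E[g_n(\omega)]^2\to0$. *)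

(* Defs.v *)
From HB Require Import structures.
From mathcomp Require Import all_boot all_order all_algebra finmap.
From mathcomp Require Import all_classical all_reals all_analysis.
Set Implicit Arguments. Unset Strict Implicit. Unset Printing Implicit Defensive.
Import Order.TTheory GRing.Theory Num.Theory.
Local Open Scope classical_set_scope.
Local Open Scope ring_scope.

(* Omega = {-1,1} is encoded by bool: true <-> 1, false <-> -1.
   Coordinates are indexed by nat (0,1,2,...), i.e. coordinate i here is
   coordinate i+1 of the paper, and [m] = {0,...,m-1}. *)
Definition sgnb {R : ringType} (b : bool) : R := if b then 1 else -1.

Definition cyl : set (set (nat -> bool)) :=
  [set A | exists i b, A = [set w : nat -> bool | w i = b]].

Definition Cube := g_sigma_algebraType cyl.

(* P is the uniform product probability measure: all coordinates are
   independent uniform bits (this determines P uniquely on the product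
   sigma-algebra). *)
Definition is_uniform_cube {R : realType} (P : probability Cube R) : Prop :=
  forall (s : seq nat) (a : nat -> bool), uniq s ->
    P [set w : Cube | forall i, i \in s -> w i = a i] = ((2^-1) ^+ size s)%:E.

Definition noise_pair_prob {R : realType} (eps : R) (a b : bool) : R :=
  if a == b then (1 - eps / 2) / 2 else eps / 4.

(* Q is the joint law of (omega, omega^eps): independent coordinate pairs,
   omega_i uniform and omega^eps_i = omega_i w.p. 1-eps, else a fresh bit. *)
Definition is_noise_coupling {R : realType} (eps : R)
    (Q : probability (Cube * Cube)%type R) : Prop :=
  forall (s : seq nat) (a b : nat -> bool), uniq s ->
    Q [set xy : Cube * Cube | forall i, i \in s -> xy.1 i = a i /\ xy.2 i = b i]
      = (\prod_(i <- s) noise_pair_prob eps (a i) (b i))%:E.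

Definition boolean_fun (f : Cube -> bool) : Prop := measurable_fun setT f.

Definition witness {R : realType} (P : probability Cube R) (f : Cube -> bool)
    (w : Cube) (W : set nat) : Prop :=
  exists A : set Cube, measurable A /\ P A = 1%E /\
    forall w' : Cube, A w' -> (forall i, W i -> w' i = w i) -> f w' = f w.

Definition finitary {R : realType} (P : probability Cube R) (f : Cube -> bool)
  : Prop :=
  exists A : set Cube, measurable A /\ P A = 1%E /\
    forall w, A w -> exists W : {fset nat}, witness P f w [set i | i \in W].

Definition fmax1 (W : {fset nat}) : nat := \max_(i <- W) i.+1.

Fixpoint lexlt (s t : seq nat) : bool :=
  match s, t with
  | [::], [::] => false
  | [::], _ :: _ => true
  | _ :: _, [::] => false
  | x :: s', y :: t' => (x < y)%N || ((x == y) && lexlt s' t')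
  end.

Definition wset_lt (W1 W2 : {fset nat}) : bool :=
  (fmax1 W1 < fmax1 W2)%N ||
  ((fmax1 W1 == fmax1 W2) &&
   ((#|` W1| < #|` W2|)%N ||
    ((#|` W1| == #|` W2|) && lexlt (sort leq W1) (sort leq W2)))).

Definition wset_le (W1 W2 : {fset nat}) : bool := (W1 == W2) || wset_lt W1 W2.

Definition least_witness {R : realType} (P : probability Cube R)
    (f : Cube -> bool) (w : Cube) (W : {fset nat}) : Prop :=
  witness P f w [set i | i \in W] /\
  forall W' : {fset nat}, witness P f w [set i | i \in W'] -> wset_le W W'.

(* W(f)(w): the least finite witness set (None if no finite witness set) *)
Definition Wf {R : realType} (P : probability Cube R) (f : Cube -> bool)
    (w : Cube) : option {fset nat} :=
  match pselect (exists W, least_witness P f w W) with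
  | left H => Some (projT1 (cid H))
  | right _ => None
  end.

(* B_m f = 1_{W(f) ⊆ [m]} f - 1_{W(f) ⊄ [m]} *)
Definition Bm {R : realType} (P : probability Cube R) (m : nat)
    (f : Cube -> bool) : Cube -> bool :=
  fun w => match Wf P f w with
           | Some W => if `[< forall i, i \in W -> (i < m)%N >] then f w else false
           | None => false
           end.

Definition noise_sensitive {R : realType} (P : probability Cube R)
    (Q : R -> probability (Cube * Cube)%type R) (g : nat -> Cube -> bool) : Prop :=
  forall eps : R, 0 < eps <= 1 ->
    (fun n => Rintegral (Q eps) setT (fun xy => sgnb (g n xy.1) * sgnb (g n xy.2))
              - (Rintegral P setT (fun x => sgnb (g n x))) ^+ 2) @ \oo --> 0.

(* Main.v *)
Require Import Defs.
From HB Require Import structures.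
From mathcomp Require Import all_boot all_order all_algebra finmap.
From mathcomp Require Import all_classical all_reals all_analysis.
From mathcomp Require Import ring lra measurable_realfun zify.
Import Order.TTheory GRing.Theory Num.Theory.
Local Open Scope classical_set_scope.
Local Open Scope ring_scope.

Definition Cyl (s : seq nat) (a : nat -> bool) : set Cube :=
  [set w : Cube | forall i, i \in s -> w i = a i].

Lemma cyl1_meas i b : measurable ([set w : Cube | w i = b]).
Proof. apply: sub_sigma_algebra; by exists i, b. Qed.

Lemma Cyl_meas s a : measurable (Cyl s a).
Proof.
elim: s => [|i s IH].
  rewrite (_ : Cyl _ _ = setT) //; apply/seteqP; split => w //= _ j; rewrite ?in_nil.
rewrite (_ : Cyl _ _ = [set w : Cube | w i = a i] `&` Cyl s a).
  exact: measurableI (cyl1_meas _ _) IH.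
apply/seteqP; split => w /=.
  by move=> H; split; [apply: H; rewrite mem_head | move=> j js; apply: H; rewrite inE js orbT].
by move=> [H1 H2] j; rewrite inE => /orP[/eqP->|/H2].
Qed.

Definition upd (a : nat -> bool) (i : nat) (v : bool) : nat -> bool :=
  fun j => if j == i then v else a j.

Definition S3 (s1 s2 t : seq nat) (a b : nat -> bool) : set (Cube * Cube) :=
  [set xy | (forall i, i \in s1 -> xy.1 i = a i) /\
            (forall i, i \in s2 -> xy.2 i = b i) /\
            (forall i, i \in t -> xy.1 i = a i /\ xy.2 i = b i)].

Lemma S3_meas s1 s2 t a b : measurable (S3 s1 s2 t a b).
Proof.
rewrite (_ : S3 _ _ _ _ _ = (fst @^-1` Cyl (s1 ++ t) a) `&` (snd @^-1` Cyl (s2 ++ t) b)).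
  apply: measurableI.
    by rewrite -[X in measurable X]setTI; apply: measurable_fst => //; exact: Cyl_meas.
  by rewrite -[X in measurable X]setTI; apply: measurable_snd => //; exact: Cyl_meas.
apply/seteqP; split => [xy|xy] /=.
  move=> [H1 [H2 H3]]; split => i; rewrite mem_cat => /orP[];
    by [move/H1|move/H3 => []|move/H2|move/H3 => []].
move=> [H1 H2]; split; [|split].
- by move=> i i1; apply: H1; rewrite mem_cat i1.
- by move=> i i1; apply: H2; rewrite mem_cat i1.
- by move=> i it; split; [apply: H1|apply: H2]; rewrite mem_cat it orbT.
Qed.

Section Coupling.
Variables (R : realType) (eps : R) (Qe : probability (Cube * Cube)%type R).
Hypothesis heps : 0 <= eps <= 1.
Hypothesis HQe : is_noise_coupling eps Qe.

Lemma pp_sum1 a : noise_pair_prob eps a true + noise_pair_prob eps a false = 2^-1.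
Proof. by case: a; rewrite /noise_pair_prob /=; field. Qed.

Lemma pp_sum2 b : noise_pair_prob eps true b + noise_pair_prob eps false b = 2^-1.
Proof. by case: b; rewrite /noise_pair_prob /=; field. Qed.

Lemma QU (A B : set (Cube * Cube)) : measurable A -> measurable B ->
  A `&` B = set0 -> Qe (A `|` B) = (Qe A + Qe B)%E.
Proof. exact: measureU. Qed.

Lemma S3_val s1 s2 t a b : uniq (s1 ++ s2 ++ t) ->
  Qe (S3 s1 s2 t a b) =
  ((2^-1) ^+ (size s1 + size s2) * \prod_(i <- t) noise_pair_prob eps (a i) (b i))%:E.
Proof.
elim: s1 t b => [|i s1 IH] t b.
  elim: s2 t a => [|i s2 IH] t a.
    move=> ut; rewrite /= expr0 mul1r -HQe //.
    congr (Qe _); apply/seteqP; split => xy /=; first by move=> [_ [_ H]].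
    by move=> H; split; [|split].
  rewrite /= => /andP[nit u2].
  have ut : uniq (s2 ++ i :: t).
    by rewrite uniq_catC /= mem_cat negb_or (uniq_catC t) -andbA; move: nit u2;
      rewrite mem_cat negb_or => /andP[-> ->]; rewrite uniq_catC.
  rewrite (_ : S3 _ _ _ _ _ = S3 [::] s2 (i :: t) (upd a i true) b `|`
                              S3 [::] s2 (i :: t) (upd a i false) b).
    rewrite QU; [|exact: S3_meas|exact: S3_meas|].
      rewrite !IH // -EFinD /= !big_cons /upd eqxx.
      have E v : \prod_(j <- t) noise_pair_prob eps (if j == i then v else a j) (b j)
                 = \prod_(j <- t) noise_pair_prob eps (a j) (b j).
        apply: eq_big_seq => j jt; case: eqP => // ji; subst j.
        by move: nit; rewrite mem_cat jt orbT.
      rewrite !E; congr (_%:E); rewrite exprS.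
      have <- := pp_sum2 (b i); ring.
    apply/seteqP; split => // xy /= [[_ [_ H1]] [_ [_ H2]]].
    have := H1 i (mem_head _ _); have := H2 i (mem_head _ _).
    by rewrite /upd eqxx => -[-> _] [].
  apply/seteqP; split => xy /=.
    move=> [_ [H2 H3]].
    have Hi : xy.2 i = b i by apply: H2; rewrite mem_head.
    have gen v : xy.1 i = v -> S3 [::] s2 (i :: t) (upd a i v) b xy.
      move=> xv; split => //; split.
        by move=> j js; apply: H2; rewrite inE js orbT.
      move=> j; rewrite inE /upd => /orP[/eqP->|jt]; first by rewrite eqxx.
      case: eqP => [ji|_]; last exact: H3.
      by subst j; move: nit; rewrite mem_cat jt orbT.
    by case E: (xy.1 i); [left|right]; apply: gen.
  have gen v : S3 [::] s2 (i :: t) (upd a i v) b xy -> S3 [::] (i :: s2) t a b xy.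
    move=> [_ [H2 H3]]; split => //; split.
      move=> j; rewrite inE => /orP[/eqP->|js]; last exact: H2.
      by case: (H3 i (mem_head _ _)).
    move=> j jt; have := H3 j; rewrite inE jt orbT /upd => /(_ isT).
    case: eqP => // ji; subst j; by move: nit; rewrite mem_cat jt orbT.
  by case; apply: gen.
rewrite /= => /andP[nit u2].
have ut : uniq (s1 ++ s2 ++ i :: t).
  rewrite catA uniq_catC /= uniq_catC -catA u2 andbT; move: nit.
  by rewrite !mem_cat !negb_or => /and3P[-> -> ->].
rewrite (_ : S3 _ _ _ _ _ = S3 s1 s2 (i :: t) a (upd b i true) `|`
                            S3 s1 s2 (i :: t) a (upd b i false)).
  rewrite QU; [|exact: S3_meas|exact: S3_meas|].
    rewrite !IH // -EFinD /= !big_cons /upd eqxx.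
    have E v : \prod_(j <- t) noise_pair_prob eps (a j) (if j == i then v else b j)
               = \prod_(j <- t) noise_pair_prob eps (a j) (b j).
      apply: eq_big_seq => j jt; case: eqP => // ji; subst j.
      by move: nit; rewrite !mem_cat jt !orbT.
    rewrite !E; congr (_%:E); rewrite addSn exprS.
    have <- := pp_sum1 (a i); ring.
  apply/seteqP; split => // xy /= [[_ [_ H1]] [_ [_ H2]]].
  have := H1 i (mem_head _ _); have := H2 i (mem_head _ _).
  by rewrite /upd eqxx => -[_ ->] [].
apply/seteqP; split => xy /=.
  move=> [H1 [H2 H3]].
  have gen v : xy.2 i = v -> S3 s1 s2 (i :: t) a (upd b i v) xy.
    move=> xv; split; first by move=> j js; apply: H1; rewrite inE js orbT.
    split.
      move=> j js; rewrite /upd; case: eqP => [ji|_]; last exact: H2.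
      by subst j; move: nit; rewrite !mem_cat js !orbT.
    move=> j; rewrite inE /upd => /orP[/eqP->|jt].
      by rewrite eqxx; split => //; apply: H1; rewrite mem_head.
    case: eqP => [ji|_]; last exact: H3.
    by subst j; move: nit; rewrite !mem_cat jt !orbT.
  by case E: (xy.2 i); [left|right]; apply: gen.
have gen v : S3 s1 s2 (i :: t) a (upd b i v) xy -> S3 (i :: s1) s2 t a b xy.
  move=> [H1 [H2 H3]]; split.
    move=> j; rewrite inE => /orP[/eqP->|js]; last exact: H1.
    by case: (H3 i (mem_head _ _)).
  split.
    move=> j js; have := H2 j js; rewrite /upd; case: eqP => // ji; subst j.
    by move: nit; rewrite !mem_cat js !orbT.
  move=> j jt; have := H3 j; rewrite inE jt orbT /upd => /(_ isT).
  case: eqP => // ji; subst j; by move: nit; rewrite !mem_cat jt !orbT.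
by case; apply: gen.
Qed.
End Coupling.

Lemma Cyl_undup s a : Cyl s a = Cyl (undup s) a.
Proof.
by apply/seteqP; split => w /= H i; [rewrite mem_undup => /H|rewrite -mem_undup => /H].
Qed.

Definition Gpi : set (set Cube) := [set A | A = set0 \/ exists s a, A = Cyl s a].

Lemma Gpi_setI : setI_closed Gpi.
Proof.
move=> A B [->|[s1 [a1 ->]]]; first by left; rewrite set0I.
move=> [->|[s2 [a2 ->]]]; first by left; rewrite setI0.
case: (pselect (exists i, [/\ i \in s1, i \in s2 & a1 i <> a2 i])).
  move=> [i [is1 is2 ne]]; left; apply/seteqP; split => // w /= [H1 H2].
  by apply: ne; rewrite -(H1 i is1) (H2 i is2).
move=> nex; right; exists (s1 ++ s2), (fun i => if i \in s1 then a1 i else a2 i).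
apply/seteqP; split => w /=.
  move=> [H1 H2] i; rewrite mem_cat; case: ifP => [is1 _|_ /= is2]; [exact: H1|exact: H2].
move=> H; split => i ii.
  by have := H i; rewrite mem_cat ii => /(_ isT).
have := H i; rewrite mem_cat ii orbT => /(_ isT); case: ifP => // is1 wi.
case: (boolP (a1 i == a2 i)) => [/eqP e|/eqP ne]; first congruence.
exfalso; apply: nex; by exists i.
Qed.

Lemma Gpi_gen : (@measurable _ Cube) = <<s Gpi >>.
Proof.
apply/seteqP; split.
  apply: smallest_sub; first exact: smallest_sigma_algebra.
  move=> A [i [b ->]]; apply: sub_sigma_algebra; right; exists [:: i], (fun _ => b).
  by apply/seteqP; split => w /=; [move=> wi j; rewrite inE => /eqP ->|apply; rewrite mem_head].
apply: smallest_sub; first exact: sigma_algebra_measurable.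
by move=> A [->|[s [a ->]]]; [exact: measurable0|exact: Cyl_meas].
Qed.

Section Marg.
Variables (R : realType) (P : probability Cube R) (eps : R)
  (Qe : probability (Cube * Cube)%type R).
Hypothesis HP : is_uniform_cube P.
Hypothesis heps : 0 <= eps <= 1.
Hypothesis HQe : is_noise_coupling eps Qe.

Lemma P_cyl s a : P (Cyl s a) = ((2^-1) ^+ size (undup s))%:E.
Proof. rewrite Cyl_undup; apply: HP; exact: undup_uniq. Qed.

Lemma Qfst_cyl s a : Qe (fst @^-1` Cyl s a) = ((2^-1) ^+ size (undup s))%:E.
Proof.
rewrite (_ : fst @^-1` _ = S3 (undup s) [::] [::] a a).
  by rewrite (@S3_val R eps Qe HQe) // ?cats0 ?undup_uniq // big_nil mulr1 addn0.
by apply/seteqP; split => xy /=; [move=> H; split => // i; rewrite mem_undup; exact: H|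
  move=> [H _] i; rewrite -mem_undup; exact: H].
Qed.

Lemma Qsnd_cyl s a : Qe (snd @^-1` Cyl s a) = ((2^-1) ^+ size (undup s))%:E.
Proof.
rewrite (_ : snd @^-1` _ = S3 [::] (undup s) [::] a a).
  by rewrite (@S3_val R eps Qe HQe) // ?cats0 ?undup_uniq // big_nil mulr1.
by apply/seteqP; split => xy /=; [move=> H; split => //; split => // i; rewrite mem_undup; exact: H|
  move=> [_ [H _]] i; rewrite -mem_undup; exact: H].
Qed.

Lemma Qfst A : measurable A -> Qe (fst @^-1` A) = P A.
Proof.
move=> mA.
have hG : forall B, Gpi B -> pushforward Qe fst B = P B.
  move=> B [->|[s [a ->]]]; first by rewrite /pushforward preimage_set0 !measure0.
  by rewrite /pushforward Qfst_cyl P_cyl.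
apply: (@measure_unique _ R Cube Gpi (fun _ => setT) Gpi_gen Gpi_setI _ _ (pushforward Qe fst) P hG _ A mA).
- by move=> _; right; exists [::], (fun _ => true); apply/seteqP; split.
- by rewrite bigcup_const.
- by move=> _; change (Qe setT < +oo)%E; rewrite probability_setT ltry.
Qed.
Lemma Qsnd A : measurable A -> Qe (snd @^-1` A) = P A.
Proof.
move=> mA.
have hG : forall B, Gpi B -> pushforward Qe snd B = P B.
  move=> B [->|[s [a ->]]]; first by rewrite /pushforward preimage_set0 !measure0.
  by rewrite /pushforward Qsnd_cyl P_cyl.
apply: (@measure_unique _ R Cube Gpi (fun _ => setT) Gpi_gen Gpi_setI _ _ (pushforward Qe snd) P hG _ A mA).
- by move=> _; right; exists [::], (fun _ => true); apply/seteqP; split.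
- by rewrite bigcup_const.
- by move=> _; change (Qe setT < +oo)%E; rewrite probability_setT ltry.
Qed.
End Marg.

Section IntBound.
Variables (d : measure_display) (T : measurableType d) (R : realType)
  (mu : probability T R).

Lemma Rint_indic E : measurable E -> Rintegral mu setT (\1_E) = fine (mu E).
Proof. by move=> mE; rewrite /Rintegral integral_indic // setIT. Qed.

Lemma int_bdd (F : T -> R) : measurable_fun setT F -> (forall x, `|F x| <= 1) ->
  mu.-integrable setT (EFin \o F).
Proof.
move=> mF bF; apply: (@le_integrable _ _ _ mu setT measurableT _ (EFin \o cst 1)).
- exact/measurable_EFinP.
- by move=> x _ /=; rewrite lee_fin normr1 bF.
- exact: finite_measure_integrable_cst.
Qed.

Lemma int_diff_bound (F G : T -> R) (E1 E2 : set T) :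
  measurable_fun setT F -> measurable_fun setT G ->
  (forall x, `|F x| <= 1) -> (forall x, `|G x| <= 1) ->
  measurable E1 -> measurable E2 ->
  (forall x, `|F x - G x| <= 2 * (\1_E1 x + \1_E2 x)) ->
  `|Rintegral mu setT F - Rintegral mu setT G| <= 2 * (fine (mu E1) + fine (mu E2)).
Proof.
move=> mF mG bF bG mE1 mE2 hFG.
have iF := @int_bdd F mF bF; have iG := @int_bdd G mG bG.
have i1 : mu.-integrable setT (EFin \o (\1_E1 : T -> R)).
  exact: integrable_indic.
have i2 : mu.-integrable setT (EFin \o (\1_E2 : T -> R)).
  exact: integrable_indic.
have i12 : mu.-integrable setT (EFin \o (fun x => \1_E1 x + \1_E2 x : R)).
  by have := integrableD measurableT i1 i2.
rewrite -RintegralB //.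
apply: (le_trans (le_normr_Rintegral _ _)) => //.
  by have := integrableB measurableT iF iG.
apply: (le_trans (@le_Rintegral _ _ _ mu setT _ (fun x => 2 * (\1_E1 x + \1_E2 x)) _ _ _ _)) => //.
- by apply: integrable_norm; have := integrableB measurableT iF iG.
- exact: (integrableZl measurableT 2 i12).
rewrite RintegralZl // RintegralD // !Rint_indic //.
Qed.
End IntBound.

Lemma ind_ge0 (R : realType) (T : Type) (A : set T) (x : T) : 0 <= \1_A x :> R.
Proof. by rewrite indicE; case: (x \in A). Qed.

Lemma sgnb_meas (R : realType) : measurable_fun setT (sgnb : bool -> R).
Proof. by move=> _ Y _. Qed.

Lemma normr_sgnb (R : realType) (b : bool) : `|sgnb b : R| = 1.
Proof. by case: b; rewrite /sgnb ?normrN normr1. Qed.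

Definition corr (R : realType) (P : probability Cube R)
  (Qe : probability (Cube * Cube)%type R) (g : Cube -> bool) : R :=
  Rintegral Qe setT (fun xy => sgnb (g xy.1) * sgnb (g xy.2))
  - (Rintegral P setT (fun x => sgnb (g x))) ^+ 2.
Arguments corr {R}.

Section CorrBound.
Variables (R : realType) (P : probability Cube R) (eps : R)
  (Qe : probability (Cube * Cube)%type R).
Hypothesis HP : is_uniform_cube P.
Hypothesis HQe : is_noise_coupling eps Qe.

Lemma Pint_le1 (g : Cube -> bool) : measurable_fun setT g ->
  `|Rintegral P setT (fun x => sgnb (g x) : R)| <= 1.
Proof.
move=> mg.
have mF : measurable_fun setT (fun x => sgnb (g x) : R).
  exact: measurableT_comp (sgnb_meas R) mg.
apply: (le_trans (le_normr_Rintegral _ _)) => //.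
  by apply: int_bdd => // x; rewrite normr_sgnb.
rewrite (@eq_Rintegral _ _ _ P setT (fun _ => 1)); last by move=> x _; rewrite normr_sgnb.
have e1 : fine (P setT) = 1 by rewrite probability_setT.
by rewrite Rintegral_cst // e1 mul1r.
Qed.

Lemma corr_diff (g h : Cube -> bool) (E : set Cube) :
  measurable_fun setT g -> measurable_fun setT h -> measurable E ->
  (forall x, ~ E x -> g x = h x) ->
  `|corr P Qe g - corr P Qe h| <= 8 * fine (P E).
Proof.
move=> mg mh mE gh.
have mFg : measurable_fun setT (fun x => sgnb (g x) : R).
  exact: measurableT_comp (sgnb_meas R) mg.
have mFh : measurable_fun setT (fun x => sgnb (h x) : R).
  exact: measurableT_comp (sgnb_meas R) mh.
have mQ (k : Cube -> bool) : measurable_fun setT k ->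
    measurable_fun setT (fun xy : Cube * Cube => sgnb (k xy.1) * sgnb (k xy.2) : R).
  move=> mk; apply: measurable_funM.
    exact: measurableT_comp (measurableT_comp (sgnb_meas R) mk) measurable_fst.
  exact: measurableT_comp (measurableT_comp (sgnb_meas R) mk) measurable_snd.
have mE1 : measurable (fst @^-1` E : set (Cube * Cube)).
  by rewrite -[X in measurable X]setTI; apply: measurable_fst.
have mE2 : measurable (snd @^-1` E : set (Cube * Cube)).
  by rewrite -[X in measurable X]setTI; apply: measurable_snd.
have hQ := @int_diff_bound _ _ R Qe _ _ _ _ (mQ g mg) (mQ h mh).
have hP := @int_diff_bound _ _ R P _ _ E set0 mFg mFh.
set X := Rintegral Qe _ _ in hQ *; set Y := Rintegral Qe _ _ in hQ *.
set a := Rintegral P _ _ in hP *; set b := Rintegral P _ _ in hP *.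
have ha : `|a| <= 1 by exact: Pint_le1.
have hb : `|b| <= 1 by exact: Pint_le1.
have {}hQ : `|X - Y| <= 4 * fine (P E).
  have := hQ _ _ _ _ mE1 mE2.
  rewrite (@Qfst R P eps Qe HP HQe E mE) (@Qsnd R P eps Qe HP HQe E mE).
  have -> : 2 * (fine (P E) + fine (P E)) = 4 * fine (P E) by ring.
  apply.
  - by move=> x; rewrite normrM !normr_sgnb mulr1.
  - by move=> x; rewrite normrM !normr_sgnb mulr1.
  move=> [x y] /=.
  have hb2 : `|sgnb (g x) * sgnb (g y) - sgnb (h x) * sgnb (h y)| <= 2 :> R.
    apply: (le_trans (ler_normB _ _)).
    by rewrite !normrM !normr_sgnb !mulr1.
  case: (pselect (E x)) => Ex.
    apply: (le_trans hb2); rewrite indicE mem_set //=.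
    have : 0 <= \1_(snd @^-1` E) (x, y) :> R by exact: ind_ge0.
    move=> h0; nra.
  case: (pselect (E y)) => Ey.
    apply: (le_trans hb2); rewrite [X in _ + X]indicE mem_set //=.
    have : 0 <= \1_(fst @^-1` E) (x, y) :> R by exact: ind_ge0.
    move=> h0; nra.
  rewrite !gh // subrr normr0.
  by apply: mulr_ge0 => //; apply: addr_ge0; exact: ind_ge0.
have {}hP : `|a - b| <= 2 * fine (P E).
  have := hP _ _ mE measurable0.
  rewrite measure0 /= addr0; apply.
  - by move=> x; rewrite normr_sgnb.
  - by move=> x; rewrite normr_sgnb.
  move=> x; case: (pselect (E x)) => Ex.
    rewrite indicE mem_set // indicE in_set0 addr0 mulr1.
    apply: (le_trans (ler_normB _ _)); rewrite !normr_sgnb; lra.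
  rewrite gh // subrr normr0.
  by apply: mulr_ge0 => //; apply: addr_ge0; exact: ind_ge0.
rewrite /corr -/X -/Y -/a -/b.
have -> : X - a ^+ 2 - (Y - b ^+ 2) = (X - Y) - (a - b) * (a + b) by ring.
apply: (le_trans (ler_normB _ _)).
rewrite normrM.
have hab : `|a + b| <= 2 by apply: (le_trans (ler_normD _ _)); lra.
have h0 : 0 <= `|a - b| by [].
have : `|a - b| * `|a + b| <= 2 * fine (P E) * 2.
  by apply: ler_pM.
nra.
Qed.
End CorrBound.

Section Comb.
Local Set Implicit Arguments. Local Unset Strict Implicit.

Lemma lexlt_trans s t u : lexlt s t -> lexlt t u -> lexlt s u.
Proof.
elim: s t u => [|x s IH] [|y t] [|z u] //=.
move=> /orP[h1|/andP[/eqP e1 l1]] /orP[h2|/andP[/eqP e2 l2]].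
- by rewrite (ltn_trans h1 h2).
- by subst z; rewrite h1.
- by subst y; rewrite h2.
- by subst y z; rewrite eqxx (IH _ _ l1 l2) orbT.
Qed.

Lemma lexlt_total s t : s <> t -> lexlt s t || lexlt t s.
Proof.
elim: s t => [|x s IH] [|y t] //= ne.
case: (ltngtP x y) => //= e; subst y.
by apply: IH => e; apply: ne; rewrite e.
Qed.


Lemma fmax1_leP (W : {fset nat}) m :
  (fmax1 W <= m)%N <-> (forall i, i \in W -> (i < m)%N).
Proof.
split.
  move=> h i iW; apply: leq_trans h; rewrite /fmax1.
  exact: (@leq_bigmax_seq _ _ xpredT (fun j => j.+1) i).
by move=> h; apply/bigmax_leqP_seq => i iW _; apply: h.
Qed.

Lemma sort_inj (W1 W2 : {fset nat}) : sort leq W1 = sort leq W2 -> W1 = W2.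
Proof.
by move=> e; apply/fsetP => i; rewrite -(mem_sort leq W1) e mem_sort.
Qed.

Lemma wset_lt_trans W1 W2 W3 : wset_lt W1 W2 -> wset_lt W2 W3 -> wset_lt W1 W3.
Proof.
rewrite /wset_lt.
move=> /orP[h1|/andP[/eqP e1 /orP[h1|/andP[/eqP f1 l1]]]]
       /orP[h2|/andP[/eqP e2 /orP[h2|/andP[/eqP f2 l2]]]].
- by rewrite (ltn_trans h1 h2).
- by rewrite -e2 h1.
- by rewrite -e2 h1.
- by rewrite e1 h2.
- by rewrite e1 e2 eqxx (ltn_trans h1 h2) orbT.
- by rewrite e1 e2 eqxx -f2 h1 orbT.
- by rewrite e1 h2.
- by rewrite e1 e2 eqxx f1 h2 orbT.
- by rewrite e1 e2 f1 f2 !eqxx (lexlt_trans l1 l2) !orbT.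
Qed.

Lemma wset_le_trans W1 W2 W3 : wset_le W1 W2 -> wset_le W2 W3 -> wset_le W1 W3.
Proof.
rewrite /wset_le => /orP[/eqP->//|h1] /orP[/eqP<-|h2]; first by rewrite h1 orbT.
by rewrite (wset_lt_trans h1 h2) orbT.
Qed.

Lemma wset_le_total W1 W2 : wset_le W1 W2 || wset_le W2 W1.
Proof.
rewrite /wset_le /wset_lt.
case: (eqVneq W1 W2) => [->|ne]; first by rewrite eqxx.
have ne2 : (W2 == W1) = false by rewrite eq_sym; exact: negbTE.
rewrite /=.
have [lt|gt|eq] := ltngtP (fmax1 W1) (fmax1 W2); rewrite /= ?orbT //.
have [lt|gt|eq2] := ltngtP #|` W1| #|` W2|; rewrite /= ?orbT //.
apply: lexlt_total => e; move/eqP: ne; apply; exact: sort_inj.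
Qed.

Lemma le_fmax1 W W' : wset_le W W' -> (fmax1 W <= fmax1 W')%N.
Proof.
rewrite /wset_le /wset_lt; move=> /orP[/eqP->//|/orP[/ltnW//|/andP[/eqP->//]]].
Qed.

Lemma list_min (s : seq {fset nat}) : s <> [::] ->
  exists2 x, x \in s & forall y, y \in s -> wset_le x y.
Proof.
elim: s => [//|a s IH] _.
case: s IH => [|b s] IH.
  by exists a; rewrite ?mem_head // => y; rewrite inE => /eqP->; rewrite /wset_le eqxx.
have [m ms hm] := IH (fun e => ltac:(discriminate)).
case/orP: (wset_le_total a m) => h.
  exists a; first exact: mem_head.
  move=> y; rewrite inE => /orP[/eqP->|ys]; first by rewrite /wset_le eqxx.
  exact: wset_le_trans h (hm y ys).
exists m; first by rewrite inE ms orbT.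
by move=> y; rewrite inE => /orP[/eqP->//|]; exact: hm.
Qed.

Lemma exists_least (p : {fset nat} -> Prop) W0 : p W0 ->
  exists W, p W /\ forall W', p W' -> wset_le W W'.
Proof.
move=> pW0.
set A : {fset nat} := [fset i | i in iota 0 (fmax1 W0)]%fset.
set L := [seq W <- (fpowerset A : seq _) | `[< p W >]].
have inL W : W \in L = (W `<=` A)%fset && `[< p W >].
  by rewrite mem_filter fpowersetE andbC.
have subA W : (W `<=` A)%fset = (fmax1 W <= fmax1 W0)%N.
  apply/idP/idP.
    move=> /fsubsetP h; apply/fmax1_leP => i /h.
    by rewrite in_fset /= mem_iota add0n.
  move=> /fmax1_leP h; apply/fsubsetP => i /h.
  by rewrite in_fset /= mem_iota add0n.
have W0L : W0 \in L by rewrite inL subA leqnn; apply/asboolP.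
have [m mL hm] := list_min (s := L) (fun e => ltac:(by rewrite e in W0L)).
move: mL; rewrite inL => /andP[mA /asboolP pm].
exists m; split => // W' pW'.
case: (boolP (W' `<=` A)%fset) => WA.
  by apply: hm; rewrite inL WA; apply/asboolP.
move: WA mA; rewrite !subA -ltnNge => h1 h2.
by rewrite /wset_le /wset_lt (leq_ltn_trans h2 h1) orbT.
Qed.

End Comb.


Lemma dep_meas m (D : set Cube) :
  (forall w w' : Cube, (forall i, (i < m)%N -> w i = w' i) -> D w -> D w') ->
  measurable D.
Proof.
elim: m D => [|m IH] D hD.
  case: (pselect (exists w, D w)) => [[w Dw]|nD].
    rewrite (_ : D = setT); first exact: measurableT.
    by apply/seteqP; split => // w' _; apply: hD Dw.
  rewrite (_ : D = set0); first exact: measurable0.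
  by apply/seteqP; split => // w Dw; apply: nD; exists w.
pose Db (b : bool) : set Cube := [set w : Cube | D (upd w m b)].
have mDb b : measurable (Db b).
  apply: IH => w w' h; rewrite /Db /=; apply: hD => i ilt; rewrite /upd.
  by case: eqP => // /eqP ne; apply: h; move: ilt; rewrite ltnS leq_eqVlt (negbTE ne).
have updK (w : Cube) : upd w m (w m) = w.
  by apply/funext => i; rewrite /upd; case: eqP => // ->.
rewrite (_ : D = ([set w : Cube | w m = true] `&` Db true) `|`
                 ([set w : Cube | w m = false] `&` Db false)).
  by apply: measurableU; apply: measurableI => //; exact: cyl1_meas.
apply/seteqP; split => w /=.
  move=> Dw; case E: (w m); [left|right]; split => //; rewrite /Db /= -E updK //.
by move=> [[E Dw]|[E Dw]]; move: Dw; rewrite /Db /= -E updK.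
Qed.

Section Wit.
Variables (R : realType) (P : probability Cube R) (f : Cube -> bool).
Hypothesis mf : measurable_fun setT f.

Lemma mf_set v : measurable [set w : Cube | f w != v].
Proof.
rewrite (_ : [set w : Cube | f w != v] = setT `&` f @^-1` [set ~~ v]).
  by apply: mf.
by apply/seteqP; split => w /=; case: (f w); case: v => //= -[].
Qed.

Lemma wit_iff (W : {fset nat}) w : witness P f w [set i | i \in W] <->
  P (Cyl W w `&` [set w' | f w' != f w]) = 0%E.
Proof.
have mC : measurable (Cyl W w `&` [set w' | f w' != f w]).
  by apply: measurableI; [exact: Cyl_meas|exact: mf_set].
split.
  move=> [A [mA [PA H]]].
  apply: (@subset_measure0 _ _ _ P _ (~` A)) => //.
  - exact: measurableC.
  - move=> w' [Cw' fw'] Aw'; move/negP: fw'; apply; apply/eqP; exact: H.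
  - by change (P (~` A) = 0%E); rewrite probability_setC // PA subee.
move=> P0; exists (~` (Cyl W w `&` [set w' | f w' != f w])); split.
  exact: measurableC.
split; first by rewrite probability_setC // P0 sube0.
move=> w' nA agree; case: (eqVneq (f w') (f w)) => // ne; exfalso.
by apply: nA; split.
Qed.

Definition Gm m : set Cube := [set w | exists W : {fset nat},
  (forall i, i \in W -> (i < m)%N) /\ witness P f w [set i | i \in W]].

Lemma Gm_meas m : measurable (Gm m).
Proof.
pose Hv (v : bool) : set Cube := [set w : Cube | exists W : {fset nat},
  (forall i, i \in W -> (i < m)%N) /\ P (Cyl W w `&` [set w' | f w' != v]) = 0%E].
have mHv v : measurable (Hv v).
  apply: (@dep_meas m) => w w' h [W [Wm PW]]; exists W; split => //.
  rewrite (_ : Cyl W w' = Cyl W w) //.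
  apply/seteqP; split => x /= hx i iW; rewrite hx // h //; exact: Wm.
rewrite (_ : Gm m = ([set w | f w = true] `&` Hv true) `|` ([set w | f w = false] `&` Hv false)).
  apply: measurableU; apply: measurableI => //.
    rewrite (_ : [set w | f w = true] = [set w | f w != false]); first exact: mf_set.
    by apply/seteqP; split => w /=; case: (f w).
  rewrite (_ : [set w | f w = false] = [set w | f w != true]); first exact: mf_set.
  by apply/seteqP; split => w /=; case: (f w).
apply/seteqP; split => w /=.
  move=> [W [Wm /wit_iff PW]]; case E: (f w); [left|right]; split => //;
    by exists W; rewrite -E.
by move=> [[E [W [Wm PW]]]|[E [W [Wm PW]]]]; exists W; split => //; apply/wit_iff; rewrite E.
Qed.

Lemma Bm_eq m w : Bm P m f w = f w && `[< Gm m w >].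
Proof.
rewrite /Bm /Wf; case: pselect => [H|nH].
  case: (cid H) => W /= [hw hl].
  case: asboolP => hsub.
    by rewrite (asboolT (_ : Gm m w)) ?andbT //; exists W.
  rewrite (asboolF (_ : ~ Gm m w)) ?andbF // => -[W0 [h0 wit0]].
  apply: hsub => i iW; have := le_fmax1 (hl W0 wit0).
  move=> /leq_trans/(_ (proj2 (fmax1_leP W0 m) h0)) /fmax1_leP; apply; exact: iW.
rewrite (asboolF (_ : ~ Gm m w)) ?andbF // => -[W0 [h0 wit0]].
have [W [hW hl]] := @exists_least (fun W => witness P f w [set i | i \in W]) W0 wit0.
by apply: nH; exists W; split.
Qed.

Lemma Bm_meas m : measurable_fun setT (Bm P m f).
Proof.
rewrite (_ : Bm P m f = fun w => f w && `[< Gm m w >]); last by apply/funext => w; exact: Bm_eq.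
apply: measurable_and => //; apply: (measurable_fun_bool true).
rewrite (_ : _ `&` _ = Gm m); first exact: Gm_meas.
by apply/seteqP; split => w /=; [move=> [_ /asboolP]|move=> h; split => //; apply/asboolP].
Qed.

End Wit.


Arguments Gm {R}.
Arguments Gm_meas {R} P {f}.
Arguments Bm_eq {R} P {f}.
Arguments Bm_meas {R} P {f}.

Lemma cvg_close (R : realType) (u v : nat -> R) : u @ \oo --> 0 ->
  (forall n, `|v n - u n| <= 8 * (n.+1%:R)^-1) -> v @ \oo --> 0.
Proof.
move=> hu hvu.
have h8 : (fun n : nat => 8 * (n.+1%:R)^-1 : R) @ \oo --> 0.
  have := @cvgMl_tmp _ _ _ _ (@harmonic R) 8 0 (@cvg_harmonic R); rewrite mulr0; apply.
have hd : (fun n => v n - u n) @ \oo --> 0.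
  apply: (@squeeze_cvgr _ _ _ _ (fun n : nat => - (8 * (n.+1%:R)^-1 : R))
     (fun n : nat => 8 * (n.+1%:R)^-1 : R)).
  - by near=> n; have := hvu n; rewrite ler_norml.
  - by rewrite -oppr0; apply: cvgN.
  - exact: h8.
have := cvgD hd hu; rewrite addr0.
have e : (fun n => v n - u n) + u = v by apply/funext => n; rewrite /= subrK.
by rewrite e; apply; exact: eventually_filter.
Unshelve. all: by end_near.
Qed.

Section Main.
Variables (R : realType) (P : probability Cube R).
Hypothesis HP : is_uniform_cube P.
Variable (Q : R -> probability (Cube * Cube)%type R).
Hypothesis HQ : forall eps : R, 0 <= eps <= 1 -> is_noise_coupling eps (Q eps).
Variable (f : nat -> Cube -> bool).
Hypothesis Hbool : forall n, boolean_fun (f n).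
Hypothesis Hfin : forall n, finitary P (f n).

Definition dd n m : R := fine (P (~` Gm P (f n) m)).

Lemma d_small n (e : R) : 0 < e ->
  exists N, forall m, (N <= m)%N -> dd n m <= e.
Proof.
move=> e0.
have mf : measurable_fun setT (f n) := Hbool n.
set G := Gm P (f n).
have mG m : measurable (G m) := Gm_meas P mf m.
have nd : {homo G : a b / (a <= b)%N >-> (a <= b)%O}.
  move=> a b ab; apply/subsetPset => w [W [hW wit]]; exists W; split => // i iW.
  exact: leq_trans (hW i iW) ab.
have mU : measurable (\bigcup_m G m) by exact: bigcupT_measurable.
have PU : P (\bigcup_m G m) = 1%E.
  have [A [mA [PA hA]]] := Hfin n.
  apply/eqP; rewrite eq_le probability_le1 //=.
  rewrite -PA; apply: le_measure; rewrite ?inE //.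
  move=> w /hA [W wit]; exists (fmax1 W) => //; exists W; split => //.
  by apply/fmax1_leP.
have hcv : (fun m => P (G m)) @ \oo --> 1%E.
  rewrite -PU; exact: nondecreasing_cvg_mu mG mU nd.
have h1 : (fine \o (fun m => P (G m))) @ \oo --> (1:R^o) by apply: fine_cvg.
move/cvgrPdist_lt: h1 => /(_ e e0) [N _ hN].
exists N => m Nm; have := hN m Nm; rewrite /= /dd.
rewrite probability_setC //.
have fin : P (G m) \is a fin_num by rewrite fin_num_measure.
rewrite -(fineK fin) -EFinB /=.
move=> h; apply: ltW; apply: le_lt_trans h; exact: ler_norm.
Qed.

Lemma corr_bound n m (eps : R) : 0 < eps <= 1 ->
  `|corr P (Q eps) (Bm P m (f n)) - corr P (Q eps) (f n)| <= 8 * dd n m.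
Proof.
move=> /andP[e0 e1].
have mf : measurable_fun setT (f n) := Hbool n.
have hq : 0 <= eps <= 1 by rewrite (ltW e0) e1.
have := (@corr_diff R P eps (Q eps) HP (HQ eps hq) (Bm P m (f n)) (f n) (~` Gm P (f n) m)). rewrite /dd; apply.
- exact: Bm_meas.
- exact: mf.
- by apply: measurableC; exact: (Gm_meas P mf).
move=> x /contrapT Gx; rewrite Bm_eq //; rewrite asboolT //; exact: andbT.
Qed.

Lemma main_sec :
  (exists r : nat -> nat, r @ \oo --> \oo /\
     forall m : nat -> nat, (forall n, (r n <= m n)%N) ->
       noise_sensitive P Q (fun n => Bm P (m n) (f n)))
  <-> noise_sensitive P Q f.
Proof.
have [M hM] : {M : nat -> nat & forall n m, (M n <= m)%N -> dd n m <= (n.+1%:R)^-1}.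
  apply: (@boolp.choice nat nat (fun n N => forall m, (N <= m)%N -> dd n m <= (n.+1%:R)^-1)) => n.
  by apply: d_small; rewrite invr_gt0 ltr0Sn.
have key (m : nat -> nat) : (forall n, (M n <= m n)%N) -> forall eps, 0 < eps <= 1 ->
    forall n, `|corr P (Q eps) (Bm P (m n) (f n)) - corr P (Q eps) (f n)|
      <= 8 * (n.+1%:R)^-1.
  move=> hm eps he n; apply: (le_trans (corr_bound n (m n) eps he)).
  by rewrite ler_pM2l //; apply: hM.
split.
- move=> [r [_ hr]] eps he.
  pose m n := maxn (r n) (M n).
  have hB := hr m (fun n => leq_maxl _ _) eps he.
  apply: (@cvg_close R _ _ hB) => n; rewrite distrC.
  by apply: (key m) => // k; exact: leq_maxr.
move=> hns; exists (fun n => maxn (M n) n); split.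
  apply/cvgnyPge => A; exists A => // k /= Ak; exact: leq_trans Ak (leq_maxr _ _).
move=> m hm eps he; apply: (@cvg_close R _ _ (hns eps he)) => n.
apply: (key m) => // k; exact: leq_trans (leq_maxl _ _) (hm k).
Qed.
End Main.

Theorem mainTheorem9 (R : realType) (P : probability Cube R)
  (HP : is_uniform_cube P)
  (Q : R -> probability (Cube * Cube)%type R)
  (HQ : forall eps : R, 0 <= eps <= 1 -> is_noise_coupling eps (Q eps))
  (f : nat -> Cube -> bool)
  (Hbool : forall n, boolean_fun (f n))
  (Hfin : forall n, finitary P (f n)) :
  (exists r : nat -> nat, r @ \oo --> \oo /\
     forall m : nat -> nat, (forall n, (r n <= m n)%N) ->
       noise_sensitive P Q (fun n => Bm P (m n) (f n)))
  <-> noise_sensitive P Q f.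
Proof. exact: (@main_sec R P HP Q HQ f Hbool Hfin). Qed.
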